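(* Let $x\ge1$ be an integer and $u,v\in\mathbf{C}$ with $\Re u>1$ and $\Re v>1$. Then \[ J_x(u,v)=\frac{x^{1-u-v}}{u+v-1}+\int_x^\infty\alpha^{-u}\zeta_1(v,\alpha)\,d\alpha+\int_x^\infty\alpha^{-v}\zeta_1(u,\alpha)\,d\alpha, \] with both integrals absolutely convergent.
   Context: For an integer $x\geq 0$, $\alpha>0$ and $\Re s>1$, $\zeta_x(s,\alpha)=\sum_{n\geq x}(n+\alpha)^{-s}$. $J_x(u,v)=\int_0^1\zeta_x(u,\alpha)\zeta_x(v,\alpha)\,d\alpha$. *)

(* Defs.v *)
From Stdlib Require Import Reals ClassicalEpsilon.
Open Scope R_scope.

Record Cplx := mkC { Re : R; Im : R }.
Definition Czero : Cplx := mkC 0 0.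
Definition Cone : Cplx := mkC 1 0.
Definition Cadd (z w : Cplx) : Cplx := mkC (Re z + Re w) (Im z + Im w).
Definition Copp (z : Cplx) : Cplx := mkC (- Re z) (- Im z).
Definition Csub (z w : Cplx) : Cplx := Cadd z (Copp w).
Definition Cmul (z w : Cplx) : Cplx :=
  mkC (Re z * Re w - Im z * Im w) (Re z * Im w + Im z * Re w).
Definition Cnorm (z : Cplx) : R := sqrt (Re z ^ 2 + Im z ^ 2).
Definition Cinv (z : Cplx) : Cplx :=
  mkC (Re z / (Re z ^ 2 + Im z ^ 2)) (- Im z / (Re z ^ 2 + Im z ^ 2)).
Definition Cdiv (z w : Cplx) : Cplx := Cmul z (Cinv w).

(** Principal power a^s = exp(s ln a) of a positive real a, s complex. *)
Definition cpow (a : R) (s : Cplx) : Cplx :=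
  mkC (exp (Re s * ln a) * cos (Im s * ln a))
      (exp (Re s * ln a) * sin (Im s * ln a)).

Definition Cseq_cv (u : nat -> Cplx) (l : Cplx) : Prop :=
  Un_cv (fun n => Re (u n)) (Re l) /\ Un_cv (fun n => Im (u n)) (Im l).

(** The limit of a complex sequence (meaningful when it converges). *)
Definition Clim (u : nat -> Cplx) : Cplx := epsilon (inhabits Czero) (Cseq_cv u).

Fixpoint Csum (f : nat -> Cplx) (N : nat) : Cplx :=
  match N with
  | O => Czero
  | S k => Cadd (Csum f k) (f k)
  end.

(** Hurwitz zeta tail: zeta_x(s, alpha) = sum_{n >= x} (n + alpha)^(-s). *)
Definition zeta_tail (x : nat) (s : Cplx) (alpha : R) : Cplx :=
  Clim (fun N => Csum (fun k => cpow (INR (x + k) + alpha) (Copp s)) N).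

Definition is_RInt (f : R -> R) (a b I : R) : Prop :=
  exists pr : Riemann_integrable f a b, RiemannInt pr = I.

Definition is_RInt_C (f : R -> Cplx) (a b : R) (I : Cplx) : Prop :=
  is_RInt (fun t => Re (f t)) a b (Re I) /\ is_RInt (fun t => Im (f t)) a b (Im I).

Definition is_improper_RInt (f : R -> R) (a I : R) : Prop :=
  (forall T, a <= T -> exists J, is_RInt f a T J) /\
  (forall eps, 0 < eps -> exists M, forall T J,
      M <= T -> a <= T -> is_RInt f a T J -> Rabs (J - I) < eps).

Definition is_improper_RInt_C (f : R -> Cplx) (a : R) (I : Cplx) : Prop :=
  (forall T, a <= T -> exists J, is_RInt_C f a T J) /\
  (forall eps, 0 < eps -> exists M, forall T J,
      M <= T -> a <= T -> is_RInt_C f a T J -> Cnorm (Csub J I) < eps).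

Definition improper_abs_conv (f : R -> Cplx) (a : R) : Prop :=
  exists L, is_improper_RInt (fun t => Cnorm (f t)) a L.

(** The integral of a complex function on [a,b] (meaningful when it exists). *)
Definition RInt_C (f : R -> Cplx) (a b : R) : Cplx :=
  epsilon (inhabits Czero) (is_RInt_C f a b).

Definition J (x : nat) (u v : Cplx) : Cplx :=
  RInt_C (fun alpha => Cmul (zeta_tail x u alpha) (zeta_tail x v alpha)) 0 1.

(* Main.v *)
Require Import Defs.
From Stdlib Require Import Reals Lra Lia Psatz ClassicalEpsilon FunctionalExtensionality.
From Coquelicot Require Import Coquelicot.
Import Defs.
Open Scope R_scope.

Lemma Cext (z w : Cplx) : Re z = Re w -> Im z = Im w -> z = w.
Proof. destruct z, w; simpl; intros; subst; reflexivity. Qed.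

Lemma Re_le_Cnorm z : Rabs (Re z) <= Cnorm z.
Proof.
  unfold Cnorm. rewrite <- sqrt_Rsqr_abs. apply sqrt_le_1_alt.
  unfold Rsqr. nra.
Qed.

Lemma Im_le_Cnorm z : Rabs (Im z) <= Cnorm z.
Proof.
  unfold Cnorm. rewrite <- sqrt_Rsqr_abs. apply sqrt_le_1_alt.
  unfold Rsqr. nra.
Qed.

Lemma Cnorm_le_sum z : Cnorm z <= Rabs (Re z) + Rabs (Im z).
Proof.
  unfold Cnorm. rewrite <- (sqrt_Rsqr (Rabs (Re z) + Rabs (Im z))).
  2:{ pose proof (Rabs_pos (Re z)); pose proof (Rabs_pos (Im z)); lra. }
  apply sqrt_le_1_alt. unfold Rsqr.
  pose proof (Rabs_pos (Re z)); pose proof (Rabs_pos (Im z)).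
  assert (Rabs (Re z) * Rabs (Re z) = Re z * Re z) by (rewrite <- Rabs_mult; apply Rabs_pos_eq; nra).
  assert (Rabs (Im z) * Rabs (Im z) = Im z * Im z) by (rewrite <- Rabs_mult; apply Rabs_pos_eq; nra).
  nra.
Qed.

Lemma Cnorm_pos z : 0 <= Cnorm z.
Proof. apply sqrt_pos. Qed.

Lemma Cnorm_mul z w : Cnorm (Cmul z w) = Cnorm z * Cnorm w.
Proof.
  unfold Cnorm, Cmul; simpl. rewrite <- sqrt_mult by nra. f_equal. ring.
Qed.

Lemma Cnorm_cpow a s : Cnorm (cpow a s) = exp (Re s * ln a).
Proof.
  unfold Cnorm, cpow; cbn [Re Im].
  set (e := exp _). set (th := Im s * ln a).
  replace ((e * cos th) ^ 2 + (e * sin th) ^ 2) with (e ^ 2 * (Rsqr (sin th) + Rsqr (cos th))) by (unfold Rsqr; ring).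
  rewrite sin2_cos2, Rmult_1_r. apply sqrt_pow2. unfold e; left; apply exp_pos.
Qed.

Definition pw (p t : R) : R := exp (p * ln t).

Lemma pw_pos p t : 0 < pw p t.
Proof. apply exp_pos. Qed.

Lemma exp_le_mono a b : a <= b -> exp a <= exp b.
Proof. intros [H|H]; [left; apply exp_increasing; auto | subst; lra]. Qed.

Lemma ln_le_mono a b : 0 < a -> a <= b -> ln a <= ln b.
Proof. intros Ha [H|H]; [left; apply ln_increasing; auto | subst; lra]. Qed.

Lemma pw_decr p s t : p <= 0 -> 0 < s -> s <= t -> pw p t <= pw p s.
Proof.
  intros Hp Hs Hst. unfold pw. apply exp_le_mono.
  pose proof (ln_le_mono s t Hs Hst). nra.
Qed.

Lemma pw_one p : pw p 1 = 1.
Proof. unfold pw. rewrite ln_1, Rmult_0_r. apply exp_0. Qed.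

Lemma pw_le_1 p t : p <= 0 -> 1 <= t -> pw p t <= 1.
Proof. intros. rewrite <- (pw_one p). apply pw_decr; lra. Qed.

Lemma pw_shift p t : 0 < t -> pw (p - 1) t = pw p t / t.
Proof.
  intros Ht. unfold pw. replace ((p-1) * ln t) with (p * ln t + - ln t) by ring.
  rewrite exp_plus, exp_Ropp, exp_ln by auto. reflexivity.
Qed.

Definition phi (sg y : R) : R := pw (1 - sg) y / (sg - 1).

Lemma phi_pos sg y : 1 < sg -> 0 < phi sg y.
Proof. intros. unfold phi. apply Rdiv_lt_0_compat. apply pw_pos. lra. Qed.

Lemma phi_decr sg s t : 1 < sg -> 0 < s -> s <= t -> phi sg t <= phi sg s.
Proof.
  intros. unfold phi. apply Rmult_le_compat_r.
  left; apply Rinv_0_lt_compat; lra. apply pw_decr; lra.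
Qed.

Lemma phi_derive sg y : 1 < sg -> 0 < y -> is_derive (phi sg) y (- pw (- sg) y).
Proof.
  intros Hs Hy. unfold phi, pw.
  auto_derive. auto.
  replace (- sg) with ((1 - sg) - 1) by ring.
  fold (pw (1 - sg) y). fold (pw ((1-sg)-1) y). rewrite pw_shift by auto.
  field. split; lra.
Qed.

Lemma phi_ineq sg y : 1 < sg -> 0 < y -> pw (- sg) (y + 1) <= phi sg y - phi sg (y + 1).
Proof.
  intros Hs Hy.
  destruct (MVT_cor2 (phi sg) (fun z => - pw (- sg) z) y (y+1)) as [c [Hc1 Hc2]].
  lra. intros c Hc. apply is_derive_Reals. apply phi_derive; lra.
  replace (phi sg y - phi sg (y+1)) with (- (phi sg (y+1) - phi sg y)) by ring.
  rewrite Hc1. replace (y + 1 - y) with 1 by ring.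
  assert (pw (- sg) (y+1) <= pw (-sg) c) by (apply pw_decr; lra). lra.
Qed.

Definition lim_inf (f : R -> R) (l : R) : Prop :=
  forall eps, 0 < eps -> exists M, forall T, M <= T -> Rabs (f T - l) < eps.

Lemma pw_lim p : p < 0 -> lim_inf (pw p) 0.
Proof.
  intros Hp eps He. exists (Rmax 1 (exp (ln eps / p) + 1)). intros T HT.
  assert (H1 : 1 <= T) by (eapply Rle_trans; [apply Rmax_l| exact HT]).
  assert (H2 : exp (ln eps / p) < T) by (eapply Rlt_le_trans; [|eapply Rle_trans; [apply Rmax_r | exact HT]]; lra).
  rewrite Rminus_0_r, Rabs_pos_eq by (left; apply pw_pos).
  unfold pw. rewrite <- (exp_ln eps) by auto. apply exp_increasing.
  apply ln_increasing in H2; [|apply exp_pos]. rewrite ln_exp in H2.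
  assert (ln eps = (ln eps / p) * p) by (field; lra). nra.
Qed.

Lemma lim_inf_plus f g a b : lim_inf f a -> lim_inf g b -> lim_inf (fun t => f t + g t) (a + b).
Proof.
  intros Hf Hg eps He. destruct (Hf (eps/2)) as [M1 H1]; [lra|]. destruct (Hg (eps/2)) as [M2 H2]; [lra|].
  exists (Rmax M1 M2). intros T HT.
  specialize (H1 T (Rle_trans _ _ _ (Rmax_l _ _) HT)). specialize (H2 T (Rle_trans _ _ _ (Rmax_r _ _) HT)).
  replace (f T + g T - (a + b)) with ((f T - a) + (g T - b)) by ring.
  eapply Rle_lt_trans; [apply Rabs_triang|]. lra.
Qed.

Lemma lim_inf_scal f a c : lim_inf f a -> lim_inf (fun t => c * f t) (c * a).
Proof.
  intros Hf eps He. destruct (Hf (eps / (Rabs c + 1))) as [M H].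
  apply Rdiv_lt_0_compat; [lra| pose proof (Rabs_pos c); lra].
  exists M. intros T HT. specialize (H T HT).
  replace (c * f T - c * a) with (c * (f T - a)) by ring. rewrite Rabs_mult.
  pose proof (Rabs_pos c).
  apply Rle_lt_trans with (Rabs c * (eps / (Rabs c + 1))).
  apply Rmult_le_compat_l; lra.
  assert (0 < eps / (Rabs c + 1)) by (apply Rdiv_lt_0_compat; lra).
  assert (Rabs c * (eps/(Rabs c+1)) < (Rabs c+1)*(eps/(Rabs c+1))) by nra.
  replace ((Rabs c+1)*(eps/(Rabs c+1))) with eps in * by (field; lra). lra.
Qed.

Lemma lim_inf_ext f g a : (forall t, f t = g t) -> lim_inf f a -> lim_inf g a.
Proof. intros E H eps He. destruct (H eps He) as [M HM]. exists M. intros; rewrite <- E; auto. Qed.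

Lemma lim_inf_squeeze f g : (exists M, forall t, M <= t -> Rabs (f t) <= g t) -> lim_inf g 0 -> lim_inf f 0.
Proof.
  intros [M0 HM0] Hg eps He. destruct (Hg eps He) as [M HM]. exists (Rmax M0 M). intros T HT.
  specialize (HM0 T (Rle_trans _ _ _ (Rmax_l _ _) HT)). specialize (HM T (Rle_trans _ _ _ (Rmax_r _ _) HT)).
  rewrite Rminus_0_r in *. apply Rle_lt_trans with (g T); auto.
  eapply Rle_lt_trans; [apply Rle_abs|exact HM].
Qed.

Lemma lim_inf_unique f a b : lim_inf f a -> lim_inf f b -> a = b.
Proof.
  intros Ha Hb. apply Rminus_diag_uniq. apply Rabs_eq_0.
  destruct (Req_dec (Rabs (a - b)) 0) as [E|E]; auto. exfalso.
  set (e := Rabs (a-b)). assert (0 < e) by (pose proof (Rabs_pos (a-b)); unfold e in *; lra).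
  destruct (Ha (e/2)) as [M1 H1]; [lra|]. destruct (Hb (e/2)) as [M2 H2]; [lra|].
  specialize (H1 (Rmax M1 M2) (Rmax_l _ _)). specialize (H2 (Rmax M1 M2) (Rmax_r _ _)).
  assert (e <= Rabs (f (Rmax M1 M2) - b) + Rabs (a - f (Rmax M1 M2))).
  { unfold e. replace (a - b) with ((f (Rmax M1 M2) - b) + (a - f (Rmax M1 M2))) by ring. apply Rabs_triang. }
  rewrite Rabs_minus_sym in H1. lra.
Qed.

Section Gen.
Variables (S c : nat -> R).
Hypothesis Hinc : forall n, (1 <= n)%nat -> Rabs (S (Datatypes.S n) - S n) <= c n - c (Datatypes.S n).
Hypothesis Hpos : forall n, (1 <= n)%nat -> 0 <= c n.

Lemma gen_tail n m : (1 <= n)%nat -> (n <= m)%nat -> Rabs (S m - S n) <= c n - c m.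
Proof.
  intros Hn Hm. induction Hm.
  - rewrite Rminus_diag, Rabs_R0. lra.
  - specialize (Hinc m ltac:(lia)).
    replace (S (Datatypes.S m) - S n) with ((S (Datatypes.S m) - S m) + (S m - S n)) by ring.
    eapply Rle_trans; [apply Rabs_triang|]. lra.
Qed.

Lemma gen_tail' n m : (1 <= n)%nat -> (n <= m)%nat -> Rabs (S m - S n) <= c n.
Proof. intros. pose proof (gen_tail n m H H0). pose proof (Hpos m ltac:(lia)). lra. Qed.

Hypothesis Hlim : forall eps, 0 < eps -> exists N, (1 <= N)%nat /\ c N < eps.
Hypothesis Hdecr : forall n m, (1 <= n)%nat -> (n <= m)%nat -> c m <= c n.

Lemma gen_cauchy : Cauchy_crit S.
Proof.
  intros eps He. destruct (Hlim eps He) as [N [HN1 HN2]]. exists N. intros n m Hn Hm.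
  unfold Rdist. destruct (Nat.le_gt_cases n m).
  - rewrite Rabs_minus_sym. eapply Rle_lt_trans; [apply (gen_tail' n m); lia|].
    eapply Rle_lt_trans; [apply (Hdecr N n); lia|]. exact HN2.
  - eapply Rle_lt_trans; [apply (gen_tail' m n); lia|].
    eapply Rle_lt_trans; [apply (Hdecr N m); lia|]. exact HN2.
Qed.

Lemma gen_limit_bound L n : Un_cv S L -> (1 <= n)%nat -> Rabs (L - S n) <= c n.
Proof.
  intros HL Hn. apply Rnot_lt_le. intro Hc.
  set (e := Rabs (L - S n) - c n).
  assert (He : e > 0) by (unfold e; lra).
  destruct (HL e He) as [N HN]. specialize (HN (Nat.max N n) ltac:(lia)).
  pose proof (gen_tail' n (Nat.max N n) Hn ltac:(lia)). unfold Rdist in HN.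
  assert (Rabs (L - S n) <= Rabs (S (Nat.max N n) - L) + Rabs (S (Nat.max N n) - S n)).
  { replace (L - S n) with (- (S (Nat.max N n) - L) + (S (Nat.max N n) - S n)) by ring.
    eapply Rle_trans; [apply Rabs_triang|]. rewrite Rabs_Ropp. lra. }
  unfold e in HN. lra.
Qed.

End Gen.

Lemma Clim_eq u l : Cseq_cv u l -> Clim u = l.
Proof.
  intros H. unfold Clim.
  assert (H2 : Cseq_cv u (epsilon (inhabits Czero) (Cseq_cv u))).
  { apply epsilon_spec. exists l; auto. }
  destruct H as [H1 H1']. destruct H2 as [H2 H2'].
  apply Cext; eapply UL_sequence; eauto.
Qed.

Lemma cpt_plus f g x : continuity_pt f x -> continuity_pt g x -> continuity_pt (fun y => f y + g y) x.
Proof. apply continuity_pt_plus. Qed.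
Lemma cpt_minus f g x : continuity_pt f x -> continuity_pt g x -> continuity_pt (fun y => f y - g y) x.
Proof. apply continuity_pt_minus. Qed.
Lemma cpt_mult f g x : continuity_pt f x -> continuity_pt g x -> continuity_pt (fun y => f y * g y) x.
Proof. apply continuity_pt_mult. Qed.
Lemma cpt_comp f g x : continuity_pt f x -> continuity_pt g (f x) -> continuity_pt (fun y => g (f y)) x.
Proof. apply continuity_pt_comp. Qed.
Lemma cpt_const c x : continuity_pt (fun _ => c) x.
Proof. apply continuity_pt_const. intros a b; reflexivity. Qed.
Lemma cpt_id x : continuity_pt (fun y => y) x.
Proof. apply derivable_continuous_pt. apply derivable_pt_id. Qed.

Lemma cpt_of_derive f x : ex_derive f x -> continuity_pt f x.
Proof. intros [l H]. apply derivable_continuous_pt. exists l. apply is_derive_Reals. exact H. Qed.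

Lemma cpt_cpow_re a b c y : 0 < c + y -> continuity_pt (fun z => exp (a * ln (c + z)) * cos (b * ln (c + z))) y.
Proof. intros H. apply cpt_of_derive. auto_derive. auto. Qed.
Lemma cpt_cpow_im a b c y : 0 < c + y -> continuity_pt (fun z => exp (a * ln (c + z)) * sin (b * ln (c + z))) y.
Proof. intros H. apply cpt_of_derive. auto_derive. auto. Qed.

Definition isproj (pr : Cplx -> R) := pr = Re \/ pr = Im.

Lemma pr_le pr z : isproj pr -> Rabs (pr z) <= Cnorm z.
Proof. intros [->| ->]; [apply Re_le_Cnorm|apply Im_le_Cnorm]. Qed.

Lemma pr_add pr z w : isproj pr -> pr (Cadd z w) = pr z + pr w.
Proof. intros [->| ->]; reflexivity. Qed.

Lemma pr_zero pr : isproj pr -> pr Czero = 0.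
Proof. intros [->| ->]; reflexivity. Qed.

Lemma cpt_pr_cpow pr s c y : isproj pr -> 0 < c + y -> continuity_pt (fun z => pr (cpow (c + z) s)) y.
Proof. intros [->| ->] H; unfold cpow; cbn [Re Im]; [apply cpt_cpow_re|apply cpt_cpow_im]; auto. Qed.

Definition Ps (s : Cplx) (t : R) (N : nat) : Cplx := Csum (fun k => cpow (INR k + t) (Copp s)) N.
Definition A (s : Cplx) (t : R) : Cplx := zeta_tail 0 s t.
Definition EE (sg t : R) : R := pw (- sg) t + phi sg t.

Lemma A_def s t : A s t = Clim (Ps s t).
Proof. reflexivity. Qed.

Lemma term_bound pr s a : isproj pr -> Rabs (pr (cpow a (Copp s))) <= pw (- Re s) a.
Proof. intros Hp. eapply Rle_trans; [apply pr_le; auto|]. rewrite Cnorm_cpow. right; reflexivity. Qed.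

Lemma Ps_S pr s t n : isproj pr -> pr (Ps s t (S n)) = pr (Ps s t n) + pr (cpow (INR n + t) (Copp s)).
Proof. intros Hp. unfold Ps. cbn [Csum]. rewrite pr_add; auto. Qed.

Section Z.
Variables (pr : Cplx -> R) (s : Cplx) (t : R).
Hypothesis Hp : isproj pr.
Hypothesis Hs : 1 < Re s.
Hypothesis Ht : 0 < t.

Let cc (n : nat) := phi (Re s) (INR n - 1 + t).

Lemma Z_inc n : (1 <= n)%nat -> Rabs (pr (Ps s t (S n)) - pr (Ps s t n)) <= cc n - cc (S n).
Proof.
  intros Hn. rewrite Ps_S by auto. replace (pr (Ps s t n) + _ - pr (Ps s t n)) with (pr (cpow (INR n + t) (Copp s))) by ring.
  eapply Rle_trans; [apply term_bound; auto|]. unfold cc. rewrite S_INR.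
  assert (1 <= INR n) by (apply (le_INR 1); auto).
  replace (INR n + t) with ((INR n - 1 + t) + 1) at 1 by ring.
  replace (INR n + 1 - 1 + t) with ((INR n - 1 + t) + 1) by ring.
  apply phi_ineq; lra.
Qed.

Lemma Z_pos n : (1 <= n)%nat -> 0 <= cc n.
Proof. intros; left; apply phi_pos; auto. Qed.

Lemma Z_lim : forall eps, 0 < eps -> exists N, (1 <= N)%nat /\ cc N < eps.
Proof.
  intros eps He. destruct (pw_lim (1 - Re s) ltac:(lra) (eps * (Re s - 1))) as [M HM].
  apply Rmult_lt_0_compat; lra.
  destruct (INR_unbounded (Rabs M + 1 - t + 1)) as [N HN].
  exists (S N). split; [lia|]. unfold cc, phi.
  specialize (HM (INR (S N) - 1 + t)). rewrite S_INR in *.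
  pose proof (Rle_abs M). pose proof (pos_INR N).
  assert (Hb := HM ltac:(lra)). rewrite Rminus_0_r, Rabs_pos_eq in Hb by (left; apply pw_pos).
  apply (Rmult_lt_reg_r (Re s - 1)). lra. unfold Rdiv. rewrite Rmult_assoc, Rinv_l by lra. lra.
Qed.

Lemma Z_decr n m : (1 <= n)%nat -> (n <= m)%nat -> cc m <= cc n.
Proof.
  intros Hn Hm. unfold cc. apply phi_decr; auto.
  assert (1 <= INR n) by (apply (le_INR 1); auto). lra.
  apply le_INR in Hm. lra.
Qed.

Lemma Z_exists : {l | Un_cv (fun n => pr (Ps s t n)) l}.
Proof.
  apply Rcomplete.R_complete. apply (gen_cauchy _ cc). exact Z_inc. exact Z_pos. exact Z_lim. exact Z_decr.
Qed.

Lemma Z_tail_gen l n : Un_cv (fun n => pr (Ps s t n)) l -> (1 <= n)%nat -> Rabs (l - pr (Ps s t n)) <= cc n.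
Proof. intros. apply (gen_limit_bound (fun n => pr (Ps s t n)) cc); auto. exact Z_inc. exact Z_pos. Qed.

End Z.

Lemma A_cv s t : 1 < Re s -> 0 < t -> Cseq_cv (Ps s t) (A s t).
Proof.
  intros Hs Ht.
  destruct (Z_exists Re s t (or_introl eq_refl) Hs Ht) as [lr Hr].
  destruct (Z_exists Im s t (or_intror eq_refl) Hs Ht) as [li Hi].
  assert (E : A s t = mkC lr li) by (rewrite A_def; apply Clim_eq; split; auto).
  rewrite E. split; auto.
Qed.

Lemma A_cv_pr pr s t : isproj pr -> 1 < Re s -> 0 < t -> Un_cv (fun n => pr (Ps s t n)) (pr (A s t)).
Proof. intros [->| ->] Hs Ht; apply (A_cv s t Hs Ht). Qed.

Lemma A_tail pr s t n : isproj pr -> 1 < Re s -> 0 < t -> (1 <= n)%nat ->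
  Rabs (pr (A s t) - pr (Ps s t n)) <= phi (Re s) (INR n - 1 + t).
Proof. intros. apply (Z_tail_gen pr s t); auto. apply A_cv_pr; auto. Qed.

Lemma A_bound pr s t : isproj pr -> 1 < Re s -> 0 < t -> Rabs (pr (A s t)) <= EE (Re s) t.
Proof.
  intros Hp Hs Ht. pose proof (A_tail pr s t 1 Hp Hs Ht (le_n 1)) as H.
  replace (INR 1 - 1 + t) with t in H by (simpl; ring).
  assert (H1 : Rabs (pr (Ps s t 1)) <= pw (- Re s) t).
  { rewrite Ps_S by auto. unfold Ps; cbn [Csum]. rewrite pr_zero, Rplus_0_l by auto.
    replace (INR 0 + t) with t by (simpl; ring). apply term_bound; auto. }
  unfold EE. replace (pr (A s t)) with ((pr (A s t) - pr (Ps s t 1)) + pr (Ps s t 1)) by ring.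
  eapply Rle_trans; [apply Rabs_triang|]. lra.
Qed.

Lemma A_norm s t : 1 < Re s -> 0 < t -> Cnorm (A s t) <= 2 * EE (Re s) t.
Proof.
  intros. eapply Rle_trans; [apply Cnorm_le_sum|].
  pose proof (A_bound Re s t (or_introl eq_refl) H H0). pose proof (A_bound Im s t (or_intror eq_refl) H H0). lra.
Qed.

Lemma Ps_cont pr s n y : isproj pr -> 0 < y -> continuity_pt (fun z => pr (Ps s z n)) y.
Proof.
  intros Hp Hy. induction n.
  - unfold Ps; cbn [Csum]. rewrite pr_zero by auto. apply cpt_const.
  - assert (E : (fun z => pr (Ps s z (S n))) = (fun z => pr (Ps s z n) + pr (cpow (INR n + z) (Copp s)))).
    { apply functional_extensionality. intros z. apply Ps_S; auto. }
    rewrite E. apply cpt_plus; auto. apply cpt_pr_cpow; auto. pose proof (pos_INR n); lra.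
Qed.


Lemma A_cont pr s y : isproj pr -> 1 < Re s -> 0 < y -> continuity_pt (fun z => pr (A s z)) y.
Proof.
  intros Hp Hs Hy.
  assert (Hr : 0 < y / 2) by lra.
  apply (CVU_continuity (fun n z => pr (Ps s z n)) (fun z => pr (A s z)) y (mkposreal _ Hr)).
  - intros eps He. destruct (Z_lim s (y/2) Hs eps He) as [N [HN1 HN2]].
    exists N. intros n z Hn Hz. unfold Boule in Hz; simpl in Hz.
    apply Rabs_def2 in Hz. destruct Hz as [Hz1 Hz2].
    eapply Rle_lt_trans; [apply A_tail; auto; try lra; lia|].
    eapply Rle_lt_trans; [|exact HN2].
    apply phi_decr; auto. assert (1 <= INR N) by (apply (le_INR 1); auto). lra.
    apply le_INR in Hn. lra.
  - intros n z Hz. unfold Boule in Hz; simpl in Hz. apply Rabs_def2 in Hz.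
    apply Ps_cont; auto. lra.
  - unfold Boule; simpl. rewrite Rminus_diag, Rabs_R0. lra.
Qed.

Lemma zeta_shift x s a : zeta_tail x s a = A s (INR x + a).
Proof.
  unfold A, zeta_tail. f_equal. apply functional_extensionality; intro N. f_equal.
  apply functional_extensionality; intro k. f_equal.
  replace (0 + k)%nat with k by lia. rewrite plus_INR. ring.
Qed.

Lemma zeta1_shift s a : zeta_tail 1 s a = A s (a + 1).
Proof. rewrite zeta_shift. f_equal. simpl. ring. Qed.

Lemma Un_cv_S u l : Un_cv u l -> Un_cv (fun n => u (S n)) l.
Proof. intros H eps He. destruct (H eps He) as [N HN]. exists N. intros n Hn. apply HN. lia. Qed.

Lemma Ps_rec pr s t n : isproj pr -> pr (Ps s t (S n)) = pr (cpow t (Copp s)) + pr (Ps s (t+1) n).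
Proof.
  intros Hp. induction n.
  - rewrite Ps_S by auto. unfold Ps; cbn [Csum]. rewrite pr_zero by auto.
    replace (INR 0 + t) with t by (simpl; ring). ring.
  - rewrite Ps_S, IHn, (Ps_S pr s (t+1)) by auto. rewrite S_INR.
    replace (INR n + 1 + t) with (INR n + (t+1)) by ring. ring.
Qed.

Lemma A_rec pr s t : isproj pr -> 1 < Re s -> 0 < t -> pr (A s t) = pr (cpow t (Copp s)) + pr (A s (t+1)).
Proof.
  intros Hp Hs Ht.
  pose proof (Un_cv_S _ _ (A_cv_pr pr s t Hp Hs Ht)) as H1.
  assert (H2 : Un_cv (fun n => pr (cpow t (Copp s)) + pr (Ps s (t+1) n)) (pr (cpow t (Copp s)) + pr (A s (t+1)))).
  { apply CV_plus. intros eps He; exists 0%nat; intros; rewrite Rdist_eq; auto.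
    apply A_cv_pr; auto; lra. }
  eapply UL_sequence; [exact H1|]. eapply Un_cv_ext; [|exact H2]. intros n. simpl. rewrite Ps_rec; auto.
Qed.

Lemma Rabs_def2b a b : Rabs a <= b -> - b <= a <= b.
Proof. intros H. pose proof (Rle_abs a). pose proof (Rle_abs (- a)). rewrite Rabs_Ropp in *. lra. Qed.

Definition cpos (f : R -> R) := forall t, 0 < t -> continuity_pt f t.

Lemma ex_RInt_pos f a b : cpos f -> 0 < a -> 0 < b -> ex_RInt f a b.
Proof.
  intros Hf Ha Hb. apply (ex_RInt_continuous (V:=R_CompleteNormedModule)). intros z Hz.
  apply (proj1 (continuity_pt_filterlim f z)). apply Hf.
  assert (0 < Rmin a b) by (apply Rmin_glb_lt; auto). lra.
Qed.

Lemma pw_cont p t : 0 < t -> continuity_pt (pw p) t.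
Proof. intros Ht. apply cpt_of_derive. unfold pw. auto_derive. auto. Qed.

Lemma cpos_pw p : cpos (pw p).
Proof. intros t Ht. apply pw_cont; auto. Qed.

Lemma RInt_pw p a b : 1 < p -> 0 < a -> 0 < b -> RInt (pw (- p)) a b = phi p a - phi p b.
Proof.
  intros Hp Ha Hb. apply is_RInt_unique.
  assert (H : Coquelicot.RInt.is_RInt (pw (- p)) a b (minus ((fun t => - phi p t) b) ((fun t => - phi p t) a))).
  { apply (is_RInt_derive (V:=R_CompleteNormedModule) (fun t => - phi p t) (pw (-p))).
    - intros x Hx. assert (0 < Rmin a b) by (apply Rmin_glb_lt; auto).
      replace (pw (- p) x) with (- (- pw (-p) x)) by ring.
      exact (is_derive_opp (phi p) x _ (phi_derive p x Hp ltac:(lra))).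
    - intros x Hx. assert (0 < Rmin a b) by (apply Rmin_glb_lt; auto).
      apply (proj1 (continuity_pt_filterlim _ x)). apply pw_cont. lra. }
  replace (phi p a - phi p b) with (minus ((fun t => - phi p t) b) ((fun t => - phi p t) a)); auto.
  unfold minus, plus, opp; simpl. ring.
Qed.

Lemma lim_inf_ext' f g a M0 : (forall t, M0 <= t -> f t = g t) -> lim_inf f a -> lim_inf g a.
Proof.
  intros E H eps He. destruct (H eps He) as [M HM]. exists (Rmax M M0). intros T HT.
  rewrite <- E by (eapply Rle_trans; [apply Rmax_r|exact HT]). apply HM.
  eapply Rle_trans; [apply Rmax_l|exact HT].
Qed.

Lemma phi_lim p : 1 < p -> lim_inf (phi p) 0.
Proof.
  intros Hp. replace 0 with (/ (p - 1) * 0) by ring.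
  eapply lim_inf_ext; [|apply lim_inf_scal; apply (pw_lim (1 - p)); lra].
  intros t. unfold phi. simpl. unfold Rdiv. ring.
Qed.

Lemma monotone_lim (G : R -> R) a B : (forall T1 T2, a <= T1 -> T1 <= T2 -> G T1 <= G T2) ->
  (forall T, a <= T -> G T <= B) -> exists l, lim_inf G l.
Proof.
  intros Hm Hb.
  destruct (completeness (fun y => exists T, a <= T /\ y = G T)) as [l [Hl1 Hl2]].
  - exists B. intros y [T [HT ->]]. auto.
  - exists (G a). exists a. split; [lra|auto].
  - exists l. intros eps He.
    assert (exists T0, a <= T0 /\ l - eps < G T0).
    { apply NNPP. intro Hn.
      assert (l <= l - eps). { apply Hl2. intros y [T [HT ->]]. apply Rnot_lt_le. intro H'. apply Hn. exists T; auto. }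
      lra. }
    destruct H as [T0 [HT0 HG0]]. exists T0. intros T HT.
    assert (G T0 <= G T) by (apply Hm; auto).
    assert (G T <= l) by (apply Hl1; exists T; split; [lra|auto]).
    rewrite Rabs_left1 by lra. lra.
Qed.

Lemma improper_ex f a C p : 0 < a -> 1 < p -> 0 <= C -> cpos f ->
  (forall t, a <= t -> Rabs (f t) <= C * pw (- p) t) -> exists I, lim_inf (fun T => RInt f a T) I.
Proof.
  intros Ha Hp HC Hf Hb.
  set (h := fun t => C * pw (- p) t).
  assert (Hh : cpos h) by (intros t Ht; apply cpt_mult; [apply cpt_const|apply pw_cont; auto]).
  set (g := fun t => f t + h t).
  assert (Hg : cpos g) by (intros t Ht; apply cpt_plus; auto).
  assert (RIh : forall T, 0 < T -> RInt h a T = C * (phi p a - phi p T)).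
  { intros T HT. unfold h. rewrite <- RInt_pw by auto.
    apply (RInt_scal (V:=R_CompleteNormedModule) (pw (-p)) a T C). apply ex_RInt_pos; auto. apply cpos_pw. }
  destruct (monotone_lim (fun T => RInt g a T) a (2 * C * phi p a)) as [l Hl].
  - intros T1 T2 H1 H2.
    rewrite <- (RInt_Chasles g a T1 T2) by (apply ex_RInt_pos; auto; lra).
    assert (0 <= RInt g T1 T2).
    { apply RInt_ge_0; auto. apply ex_RInt_pos; auto; lra. intros x Hx. unfold g, h.
      specialize (Hb x ltac:(lra)). apply Rabs_def2b in Hb. lra. }
    simpl. unfold plus; simpl. lra.
  - intros T HT.
    apply Rle_trans with (RInt (fun t => 2 * h t) a T).
    { apply RInt_le; auto. apply ex_RInt_pos; auto; lra.
      apply ex_RInt_pos; [intros t Ht; apply cpt_mult; [apply cpt_const|apply Hh; auto]|auto|lra].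
      intros x Hx. unfold g. specialize (Hb x ltac:(lra)). apply Rabs_def2b in Hb. unfold h in *. lra. }
    assert (E2 : RInt (fun t => 2 * h t) a T = 2 * RInt h a T).
    { apply (RInt_scal (V:=R_CompleteNormedModule) h a T 2). apply ex_RInt_pos; auto; lra. }
    rewrite E2, RIh by lra.
    pose proof (phi_pos p T Hp). nra.
  - exists (l - C * phi p a).
    assert (Hlim : lim_inf (fun T => RInt g a T + (- C) * phi p a + C * phi p T) (l + (- C) * phi p a + C * 0)).
    { apply lim_inf_plus. apply lim_inf_plus; auto. intros e He; exists 0; intros; rewrite Rminus_diag, Rabs_R0; auto.
      apply lim_inf_scal. apply phi_lim; auto. }
    replace (l - C * phi p a) with (l + - C * phi p a + C * 0) by ring.
    eapply (lim_inf_ext' _ _ _ a); [|exact Hlim]. intros T HT. simpl.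
    assert (E : RInt g a T = plus (RInt f a T) (RInt h a T)).
    { unfold g. apply (RInt_plus (V:=R_CompleteNormedModule) f h); apply ex_RInt_pos; auto; lra. }
    rewrite E, RIh by lra. unfold plus; simpl. ring.
Qed.

Lemma to_improper f a I : 0 < a -> cpos f -> lim_inf (fun T => RInt f a T) I -> is_improper_RInt f a I.
Proof.
  intros Ha Hf Hl. split.
  - intros T HT. exists (RInt f a T). exists (ex_RInt_Reals_0 _ _ _ (ex_RInt_pos f a T Hf Ha ltac:(lra))).
    symmetry. apply RInt_Reals.
  - intros eps He. destruct (Hl eps He) as [M HM]. exists M. intros T J HM1 HT [pr Hpr].
    rewrite <- Hpr, <- RInt_Reals. apply HM; auto.
Qed.

Lemma is_RInt_val f a b J : 0 < a -> 0 < b -> cpos f -> Defs.is_RInt f a b J -> J = RInt f a b.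
Proof. intros Ha Hb Hf [pr Hpr]. rewrite <- Hpr. symmetry. apply RInt_Reals. Qed.

Lemma to_improper_C (F : R -> Cplx) a I : 0 < a -> cpos (fun t => Re (F t)) -> cpos (fun t => Im (F t)) ->
  lim_inf (fun T => RInt (fun t => Re (F t)) a T) (Re I) ->
  lim_inf (fun T => RInt (fun t => Im (F t)) a T) (Im I) -> is_improper_RInt_C F a I.
Proof.
  intros Ha Hr Hi Lr Li. split.
  - intros T HT. exists (mkC (RInt (fun t => Re (F t)) a T) (RInt (fun t => Im (F t)) a T)). split; simpl.
    + exists (ex_RInt_Reals_0 _ _ _ (ex_RInt_pos _ a T Hr Ha ltac:(lra))). symmetry. apply RInt_Reals.
    + exists (ex_RInt_Reals_0 _ _ _ (ex_RInt_pos _ a T Hi Ha ltac:(lra))). symmetry. apply RInt_Reals.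
  - intros eps He. destruct (Lr (eps/2)) as [M1 H1]; [lra|]. destruct (Li (eps/2)) as [M2 H2]; [lra|].
    exists (Rmax M1 M2). intros T J HM HT [Jr Ji].
    apply is_RInt_val in Jr; auto; try lra. apply is_RInt_val in Ji; auto; try lra.
    eapply Rle_lt_trans; [apply Cnorm_le_sum|]. unfold Csub, Cadd, Copp; cbn [Re Im].
    rewrite Jr, Ji.
    specialize (H1 T (Rle_trans _ _ _ (Rmax_l _ _) HM)). specialize (H2 T (Rle_trans _ _ _ (Rmax_r _ _) HM)).
    unfold Rminus in H1, H2. lra.
Qed.

Definition ccont (F : R -> Cplx) := cpos (fun t => Re (F t)) /\ cpos (fun t => Im (F t)).

Lemma ccont_pr F pr : isproj pr -> ccont F -> cpos (fun t => pr (F t)).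
Proof. intros [->| ->] [H1 H2]; auto. Qed.

Lemma ccont_mul F G : ccont F -> ccont G -> ccont (fun t => Cmul (F t) (G t)).
Proof.
  intros [F1 F2] [G1 G2]. split; intros t Ht; unfold Cmul; cbn [Re Im].
  - apply cpt_minus; apply cpt_mult; auto.
  - apply cpt_plus; apply cpt_mult; auto.
Qed.

Lemma ccont_cpow s : ccont (fun t => cpow t s).
Proof.
  split; intros t Ht.
  - assert (E : (fun t => Re (cpow t s)) = (fun z => Re (cpow (0 + z) s))).
    { apply functional_extensionality; intro z; rewrite Rplus_0_l; auto. }
    rewrite E. apply cpt_pr_cpow. left; auto. lra.
  - assert (E : (fun t => Im (cpow t s)) = (fun z => Im (cpow (0 + z) s))).
    { apply functional_extensionality; intro z; rewrite Rplus_0_l; auto. }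
    rewrite E. apply cpt_pr_cpow. right; auto. lra.
Qed.

Lemma ccont_A s : 1 < Re s -> ccont (A s).
Proof. intros Hs. split; intros t Ht; apply A_cont; auto; [left|right]; auto. Qed.

Lemma ccont_A1 s : 1 < Re s -> ccont (fun t => A s (t + 1)).
Proof.
  intros Hs. split; intros t Ht;
  (apply (cpt_comp (fun t => t + 1) (fun z => _ (A s z))); [apply cpt_plus; [apply cpt_id|apply cpt_const]|]);
  apply A_cont; auto; try lra; [left|right]; auto.
Qed.

Lemma cpos_norm F : ccont F -> cpos (fun t => Cnorm (F t)).
Proof.
  intros [F1 F2] t Ht. unfold Cnorm.
  apply (cpt_comp (fun t => Re (F t) ^ 2 + Im (F t) ^ 2) sqrt).
  - apply cpt_plus; simpl; (apply cpt_mult; [auto|apply cpt_mult; [auto|apply cpt_const]]).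
  - apply continuity_pt_sqrt. nra.
Qed.

Lemma EE_decr sg s t : 1 < sg -> 0 < s -> s <= t -> EE sg t <= EE sg s.
Proof.
  intros. unfold EE. pose proof (pw_decr (- sg) s t ltac:(lra) H0 H1). pose proof (phi_decr sg s t H H0 H1). lra.
Qed.

Lemma EE_pos sg t : 1 < sg -> 0 <= EE sg t.
Proof. intros. unfold EE. pose proof (pw_pos (- sg) t). pose proof (phi_pos sg t H). lra. Qed.

Lemma EE_lim sg : 1 < sg -> lim_inf (EE sg) 0.
Proof.
  intros. replace 0 with (0 + 0) by ring. apply lim_inf_plus. apply pw_lim; lra. apply phi_lim; auto.
Qed.

Lemma f_bound s w t : 1 < Re s -> 1 < Re w -> 1 <= t ->
  Cnorm (Cmul (cpow t (Copp s)) (A w (t + 1))) <= (2 * EE (Re w) 1) * pw (- Re s) t.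
Proof.
  intros Hs Hw Ht. rewrite Cnorm_mul, Cnorm_cpow.
  change (exp (Re (Copp s) * ln t)) with (pw (- Re s) t).
  pose proof (A_norm w (t+1) Hw ltac:(lra)). pose proof (EE_decr (Re w) 1 (t+1) Hw ltac:(lra) ltac:(lra)).
  pose proof (pw_pos (- Re s) t). nra.
Qed.

Lemma improper_f s w (X : R) : 1 < Re s -> 1 < Re w -> 1 <= X ->
  let F := fun t => Cmul (cpow t (Copp s)) (zeta_tail 1 w t) in
  exists I, is_improper_RInt_C F X I /\ improper_abs_conv F X /\
    lim_inf (fun T => RInt (fun t => Re (F t)) X T) (Re I) /\
    lim_inf (fun T => RInt (fun t => Im (F t)) X T) (Im I).
Proof.
  intros Hs Hw HX F.
  assert (EF : F = fun t => Cmul (cpow t (Copp s)) (A w (t + 1))).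
  { unfold F. apply functional_extensionality; intro t. rewrite zeta1_shift. auto. }
  assert (HF : ccont F) by (rewrite EF; apply ccont_mul; [apply ccont_cpow|apply ccont_A1; auto]).
  set (K := 2 * EE (Re w) 1).
  assert (HK : 0 <= K) by (unfold K; pose proof (EE_pos (Re w) 1 Hw); lra).
  assert (Hb : forall t, X <= t -> Cnorm (F t) <= K * pw (- Re s) t).
  { intros t Ht. rewrite EF. apply f_bound; auto; lra. }
  destruct (improper_ex (fun t => Re (F t)) X K (Re s)) as [Ir HIr]; auto; try lra.
  { apply (ccont_pr F Re); [left; auto|exact HF]. }
  { intros t Ht. eapply Rle_trans; [apply Re_le_Cnorm|auto]. }
  destruct (improper_ex (fun t => Im (F t)) X K (Re s)) as [Ii HIi]; auto; try lra.
  { apply (ccont_pr F Im); [right; auto|exact HF]. }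
  { intros t Ht. eapply Rle_trans; [apply Im_le_Cnorm|auto]. }
  destruct (improper_ex (fun t => Cnorm (F t)) X K (Re s)) as [In HIn]; auto; try lra.
  { apply cpos_norm; auto. }
  { intros t Ht. rewrite Rabs_pos_eq by apply Cnorm_pos. auto. }
  exists (mkC Ir Ii). split; [|split; [|split]]; auto.
  - apply to_improper_C; simpl; auto; try lra; [apply (ccont_pr F Re); [left|]|apply (ccont_pr F Im); [right|]]; auto.
  - exists In. apply to_improper; auto; try lra. apply cpos_norm; auto.
Qed.

Section D.
Variables u v : Cplx.
Hypothesis Hu : 1 < Re u.
Hypothesis Hv : 1 < Re v.

Definition Dp (t : R) := Cmul (cpow t (Copp u)) (cpow t (Copp v)).
Definition Qf (t : R) := Cdiv (cpow t (Csub (Csub Cone u) v)) (Csub (Cadd u v) Cone).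

Lemma Dp_re t : 0 < t -> Re (Dp t) =
  exp ((1 + - Re u + - Re v) * ln t) / t * cos ((0 + - Im u + - Im v) * ln t).
Proof.
  intros Ht. unfold Dp, Cmul, cpow; cbn [Re Im Copp].
  replace ((0 + - Im u + - Im v) * ln t) with (- Im u * ln t + - Im v * ln t) by ring.
  rewrite cos_plus.
  replace ((1 + - Re u + - Re v) * ln t) with (- Re u * ln t + - Re v * ln t + ln t) by ring.
  rewrite !exp_plus, exp_ln by auto. field. lra.
Qed.

Lemma Dp_im t : 0 < t -> Im (Dp t) =
  exp ((1 + - Re u + - Re v) * ln t) / t * sin ((0 + - Im u + - Im v) * ln t).
Proof.
  intros Ht. unfold Dp, Cmul, cpow; cbn [Re Im Copp].
  replace ((0 + - Im u + - Im v) * ln t) with (- Im u * ln t + - Im v * ln t) by ring.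
  rewrite sin_plus.
  replace ((1 + - Re u + - Re v) * ln t) with (- Re u * ln t + - Re v * ln t + ln t) by ring.
  rewrite !exp_plus, exp_ln by auto. field. lra.
Qed.

Let c := Re u + Re v + - 1.
Let d := Im u + Im v + - 0.
Lemma Nz : c ^ 2 + d ^ 2 <> 0.
Proof. unfold c. nra. Qed.

Lemma Qf_re t : Re (Qf t) = exp ((1 + - Re u + - Re v) * ln t) * cos ((0 + - Im u + - Im v) * ln t) * (c / (c^2 + d^2))
   - exp ((1 + - Re u + - Re v) * ln t) * sin ((0 + - Im u + - Im v) * ln t) * (- d / (c^2+d^2)).
Proof. reflexivity. Qed.

Lemma Qf_im t : Im (Qf t) = exp ((1 + - Re u + - Re v) * ln t) * cos ((0 + - Im u + - Im v) * ln t) * (- d / (c^2 + d^2))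
   + exp ((1 + - Re u + - Re v) * ln t) * sin ((0 + - Im u + - Im v) * ln t) * (c / (c^2+d^2)).
Proof. reflexivity. Qed.

Lemma Qf_re_derive t : 0 < t -> is_derive (fun t => Re (Qf t)) t (- Re (Dp t)).
Proof.
  intros Ht. rewrite Dp_re by auto.
  eapply is_derive_ext. { intros z. symmetry. apply Qf_re. }
  pose proof Nz. auto_derive. auto.
  unfold c, d in *. field. split; [|lra]. apply Rgt_not_eq. nra.
Qed.

Lemma Qf_im_derive t : 0 < t -> is_derive (fun t => Im (Qf t)) t (- Im (Dp t)).
Proof.
  intros Ht. rewrite Dp_im by auto.
  eapply is_derive_ext. { intros z. symmetry. apply Qf_im. }
  pose proof Nz. auto_derive. auto.
  unfold c, d in *. field. split; [|lra]. apply Rgt_not_eq. nra.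
Qed.


Lemma Qf_derive pr t : isproj pr -> 0 < t -> is_derive (fun t => - pr (Qf t)) t (pr (Dp t)).
Proof.
  intros Hp Ht. replace (pr (Dp t)) with (- (- pr (Dp t))) by ring.
  apply (is_derive_opp (fun t => pr (Qf t))).
  destruct Hp as [-> | ->]; [apply Qf_re_derive|apply Qf_im_derive]; auto.
Qed.

Lemma ccont_Dp : ccont Dp.
Proof. unfold Dp. apply ccont_mul; apply ccont_cpow. Qed.

Lemma RInt_Dp pr a b : isproj pr -> 0 < a -> 0 < b -> RInt (fun t => pr (Dp t)) a b = pr (Qf a) - pr (Qf b).
Proof.
  intros Hp Ha Hb. apply is_RInt_unique.
  assert (Hm : 0 < Rmin a b) by (apply Rmin_glb_lt; auto).
  assert (H : Coquelicot.RInt.is_RInt (fun t => pr (Dp t)) a b (minus ((fun t => - pr (Qf t)) b) ((fun t => - pr (Qf t)) a))).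
  { apply (is_RInt_derive (V:=R_CompleteNormedModule) (fun t => - pr (Qf t)) (fun t => pr (Dp t))).
    - intros x Hx. apply Qf_derive; auto; lra.
    - intros x Hx. apply (proj1 (continuity_pt_filterlim _ x)). apply ccont_pr; auto. apply ccont_Dp. lra. }
  replace (pr (Qf a) - pr (Qf b)) with (minus ((fun t => - pr (Qf t)) b) ((fun t => - pr (Qf t)) a)); auto.
  unfold minus, plus, opp; simpl. ring.
Qed.

Lemma Qf_lim pr : isproj pr -> lim_inf (fun T => pr (Qf T)) 0.
Proof.
  intros Hp. apply (lim_inf_squeeze _ (fun T => Cnorm (Cinv (Csub (Cadd u v) Cone)) * pw (1 + - Re u + - Re v) T)).
  - exists 0. intros t Ht. eapply Rle_trans; [apply pr_le; auto|].
    unfold Qf, Cdiv. rewrite Cnorm_mul, Cnorm_cpow. rewrite Rmult_comm. right; reflexivity.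
  - replace 0 with (Cnorm (Cinv (Csub (Cadd u v) Cone)) * 0) by ring.
    apply lim_inf_scal. apply pw_lim. lra.
Qed.

End D.

Lemma RInt_shift (f : R -> R) a b c : ex_RInt f (a + c) (b + c) -> RInt (fun y => f (y + c)) a b = RInt f (a + c) (b + c).
Proof.
  intros H.
  assert (E := RInt_comp_lin (V:=R_CompleteNormedModule) f 1 c a b).
  replace (1 * a + c) with (a + c) in E by ring. replace (1 * b + c) with (b + c) in E by ring.
  rewrite <- (E H). apply RInt_ext. intros y _. simpl. unfold scal; simpl. unfold mult; simpl.
  rewrite Rmult_1_l. f_equal. ring.
Qed.

Lemma ccont_f s w : 1 < Re s -> 1 < Re w -> ccont (fun t => Cmul (cpow t (Copp s)) (zeta_tail 1 w t)).
Proof.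
  intros Hs Hw.
  assert (EF : (fun t => Cmul (cpow t (Copp s)) (zeta_tail 1 w t)) = fun t => Cmul (cpow t (Copp s)) (A w (t + 1))).
  { apply functional_extensionality; intro t. rewrite zeta1_shift. auto. }
  rewrite EF. apply ccont_mul; [apply ccont_cpow|apply ccont_A1; auto].
Qed.

Section Main.
Variables u v : Cplx.
Hypothesis Hu : 1 < Re u.
Hypothesis Hv : 1 < Re v.

Definition Hf t := Cmul (A u t) (A v t).
Definition f1 t := Cmul (cpow t (Copp u)) (zeta_tail 1 v t).
Definition f2 t := Cmul (cpow t (Copp v)) (zeta_tail 1 u t).

Lemma ccont_Hf : ccont Hf.
Proof. unfold Hf. apply ccont_mul; apply ccont_A; auto. Qed.

Lemma key_id pr t : isproj pr -> 0 < t ->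
  pr (Hf t) - pr (Hf (t + 1)) = pr (Dp u v t) + pr (f1 t) + pr (f2 t).
Proof.
  intros Hp Ht. unfold Hf, f1, f2, Dp. rewrite !zeta1_shift.
  pose proof (A_rec Re u t (or_introl eq_refl) Hu Ht) as R1.
  pose proof (A_rec Im u t (or_intror eq_refl) Hu Ht) as I1.
  pose proof (A_rec Re v t (or_introl eq_refl) Hv Ht) as R2.
  pose proof (A_rec Im v t (or_intror eq_refl) Hv Ht) as I2.
  destruct Hp as [-> | ->]; unfold Cmul; cbn [Re Im]; rewrite R1, I1, R2, I2; ring.
Qed.

Lemma int_id pr X T : isproj pr -> 0 < X -> X <= T ->
  RInt (fun t => pr (Hf t)) X (X + 1) =
  (pr (Qf u v X) - pr (Qf u v T)) + RInt (fun t => pr (f1 t)) X T + RInt (fun t => pr (f2 t)) X T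
   + RInt (fun t => pr (Hf t)) T (T + 1).
Proof.
  intros Hp HX HT.
  assert (cH : cpos (fun t => pr (Hf t))) by (apply ccont_pr; auto; apply ccont_Hf).
  assert (cD : cpos (fun t => pr (Dp u v t))) by (apply ccont_pr; auto; apply ccont_Dp).
  assert (c1 : cpos (fun t => pr (f1 t))) by (apply ccont_pr; auto; apply ccont_f; auto).
  assert (c2 : cpos (fun t => pr (f2 t))) by (apply ccont_pr; auto; apply ccont_f; auto).
  assert (E1 : RInt (fun t => pr (Hf t) - pr (Hf (t + 1))) X T =
               RInt (fun t => pr (Dp u v t) + pr (f1 t) + pr (f2 t)) X T).
  { apply RInt_ext. intros y Hy. rewrite Rmin_left, Rmax_right in Hy by lra. apply key_id; auto; lra. }
  assert (E2 : RInt (fun t => pr (Dp u v t) + pr (f1 t) + pr (f2 t)) X T =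
               RInt (fun t => pr (Dp u v t)) X T + RInt (fun t => pr (f1 t)) X T + RInt (fun t => pr (f2 t)) X T).
  { rewrite (RInt_plus (V:=R_CompleteNormedModule) (fun t => pr (Dp u v t) + pr (f1 t)) (fun t => pr (f2 t))).
    rewrite (RInt_plus (V:=R_CompleteNormedModule) (fun t => pr (Dp u v t)) (fun t => pr (f1 t))).
    reflexivity.
    all: try (apply ex_RInt_pos; auto; lra).
    apply (ex_RInt_plus (V:=R_CompleteNormedModule)); apply ex_RInt_pos; auto; lra. }
  assert (E3 : RInt (fun t => pr (Hf t) - pr (Hf (t + 1))) X T =
               RInt (fun t => pr (Hf t)) X T - RInt (fun t => pr (Hf (t + 1))) X T).
  { apply (RInt_minus (V:=R_CompleteNormedModule) (fun t => pr (Hf t)) (fun t => pr (Hf (t + 1)))).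
    apply ex_RInt_pos; auto; lra.
    apply ex_RInt_pos; auto; try lra. intros t Ht. apply (cpt_comp (fun t => t + 1) (fun z => pr (Hf z))).
    apply cpt_plus; [apply cpt_id|apply cpt_const]. apply cH; lra. }
  rewrite (RInt_shift (fun z => pr (Hf z)) X T 1) in E3 by (apply ex_RInt_pos; auto; lra).
  rewrite RInt_Dp in E2 by (auto; lra).
  assert (C1 := RInt_Chasles (V:=R_CompleteNormedModule) (fun t => pr (Hf t)) X T (T + 1)).
  assert (C2 := RInt_Chasles (V:=R_CompleteNormedModule) (fun t => pr (Hf t)) X (X + 1) (T + 1)).
  specialize (C1 ltac:(apply ex_RInt_pos; auto; lra) ltac:(apply ex_RInt_pos; auto; lra)).
  specialize (C2 ltac:(apply ex_RInt_pos; auto; lra) ltac:(apply ex_RInt_pos; auto; lra)).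
  simpl in C1, C2. unfold plus in C1, C2; simpl in C1, C2.
  lra.
Qed.

Lemma Hf_tail pr : isproj pr -> lim_inf (fun T => RInt (fun t => pr (Hf t)) T (T + 1)) 0.
Proof.
  intros Hp. set (K := 2 * EE (Re v) 1).
  apply (lim_inf_squeeze _ (fun T => K * (2 * EE (Re u) T))).
  - exists 1. intros T HT. eapply Rle_trans.
    apply abs_RInt_le_const with (M := K * (2 * EE (Re u) T)). lra.
    apply ex_RInt_pos; auto; try lra. apply ccont_pr; auto. apply ccont_Hf.
    + intros t Ht. eapply Rle_trans; [apply pr_le; auto|]. unfold Hf. rewrite Cnorm_mul.
      pose proof (A_norm u t Hu ltac:(lra)). pose proof (A_norm v t Hv ltac:(lra)).
      pose proof (EE_decr (Re u) T t Hu ltac:(lra) ltac:(lra)).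
      pose proof (EE_decr (Re v) 1 t Hv ltac:(lra) ltac:(lra)).
      pose proof (Cnorm_pos (A u t)). pose proof (Cnorm_pos (A v t)).
      pose proof (EE_pos (Re u) t Hu). pose proof (EE_pos (Re v) t Hv). unfold K.
      apply Rle_trans with (2 * EE (Re u) t * (2 * EE (Re v) t)). apply Rmult_le_compat; lra.
      nra.
    + right. ring.
  - replace 0 with (K * (2 * 0)) by ring. apply lim_inf_scal. apply lim_inf_scal. apply EE_lim; auto.
Qed.

End Main.

Lemma lim_const c : lim_inf (fun _ => c) c.
Proof. intros e He; exists 0; intros; rewrite Rminus_diag, Rabs_R0; auto. Qed.

Lemma J_comp (x : nat) u v pr : (1 <= x)%nat -> 1 < Re u -> 1 < Re v -> isproj pr ->
  Defs.is_RInt (fun a => pr (Cmul (zeta_tail x u a) (zeta_tail x v a))) 0 1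
     (RInt (fun t => pr (Hf u v t)) (INR x) (INR x + 1)).
Proof.
  intros Hx Hu Hv Hp. set (X := INR x).
  assert (HX : 1 <= X) by (apply (le_INR 1); auto).
  assert (EF : (fun a => pr (Cmul (zeta_tail x u a) (zeta_tail x v a))) = (fun a => pr (Hf u v (a + X)))).
  { apply functional_extensionality; intro a. rewrite !zeta_shift. unfold Hf. fold X. f_equal. f_equal; f_equal; ring. }
  rewrite EF.
  assert (cH : cpos (fun t => pr (Hf u v t))) by (apply ccont_pr; auto; apply ccont_Hf; auto).
  assert (Hex : ex_RInt (fun a => pr (Hf u v (a + X))) 0 1).
  { apply (ex_RInt_continuous (V:=R_CompleteNormedModule)). intros z Hz.
    rewrite Rmin_left, Rmax_right in Hz by lra.
    apply (proj1 (continuity_pt_filterlim _ z)).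
    apply (cpt_comp (fun t => t + X) (fun z => pr (Hf u v z))).
    apply cpt_plus; [apply cpt_id|apply cpt_const]. apply cH; lra. }
  exists (ex_RInt_Reals_0 _ _ _ Hex). rewrite <- RInt_Reals.
  rewrite (RInt_shift (fun z => pr (Hf u v z)) 0 1 X). f_equal; ring.
  apply ex_RInt_pos; auto; lra.
Qed.

Lemma RInt_uniq f a b I1 I2 : Defs.is_RInt f a b I1 -> Defs.is_RInt f a b I2 -> I1 = I2.
Proof. intros [p1 H1] [p2 H2]. rewrite <- H1, <- H2. apply RiemannInt_P5. Qed.

Theorem mainTheorem7 (x : nat) (u v : Cplx) :
  (1 <= x)%nat -> 1 < Re u -> 1 < Re v ->
  exists I1 I2 : Cplx,
    (exists Jv, is_RInt_C (fun alpha => Cmul (zeta_tail x u alpha) (zeta_tail x v alpha)) 0 1 Jv) /\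
    is_improper_RInt_C (fun alpha => Cmul (cpow alpha (Copp u)) (zeta_tail 1 v alpha)) (INR x) I1 /\
    improper_abs_conv (fun alpha => Cmul (cpow alpha (Copp u)) (zeta_tail 1 v alpha)) (INR x) /\
    is_improper_RInt_C (fun alpha => Cmul (cpow alpha (Copp v)) (zeta_tail 1 u alpha)) (INR x) I2 /\
    improper_abs_conv (fun alpha => Cmul (cpow alpha (Copp v)) (zeta_tail 1 u alpha)) (INR x) /\
    J x u v =
      Cadd (Cadd (Cdiv (cpow (INR x) (Csub (Csub Cone u) v)) (Csub (Cadd u v) Cone)) I1) I2.
Proof.
  intros Hx Hu Hv.
  assert (HX : 1 <= INR x) by (apply (le_INR 1); auto).
  destruct (improper_f u v (INR x) Hu Hv HX) as [I1 [HI1 [HA1 [L1r L1i]]]].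
  destruct (improper_f v u (INR x) Hv Hu HX) as [I2 [HI2 [HA2 [L2r L2i]]]].
  exists I1, I2.
  set (Jv := mkC (RInt (fun t => Re (Hf u v t)) (INR x) (INR x + 1)) (RInt (fun t => Im (Hf u v t)) (INR x) (INR x + 1))).
  assert (HJv : is_RInt_C (fun alpha => Cmul (zeta_tail x u alpha) (zeta_tail x v alpha)) 0 1 Jv).
  { split; [apply (J_comp x u v Re)|apply (J_comp x u v Im)]; auto; [left|right]; auto. }
  split; [exists Jv; auto|]. split; auto. split; auto. split; auto. split; auto.
  assert (EJ : J x u v = Jv).
  { unfold J, RInt_C.
    assert (Hs := epsilon_spec (inhabits Czero) (is_RInt_C (fun alpha => Cmul (zeta_tail x u alpha) (zeta_tail x v alpha)) 0 1) (ex_intro _ Jv HJv)).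
    destruct Hs as [S1 S2]. destruct HJv as [T1 T2].
    apply Cext; eapply RInt_uniq; eauto. }
  rewrite EJ.
  assert (Main : forall pr, isproj pr ->
     lim_inf (fun T => RInt (fun t => pr (f1 u v t)) (INR x) T) (pr I1) ->
     lim_inf (fun T => RInt (fun t => pr (f2 u v t)) (INR x) T) (pr I2) ->
     RInt (fun t => pr (Hf u v t)) (INR x) (INR x + 1) =
       pr (Qf u v (INR x)) + pr I1 + pr I2).
  { intros pr Hp La Lb.
    apply (lim_inf_unique (fun T => (pr (Qf u v (INR x)) + (-1) * pr (Qf u v T)) + RInt (fun t => pr (f1 u v t)) (INR x) T
                          + RInt (fun t => pr (f2 u v t)) (INR x) T + RInt (fun t => pr (Hf u v t)) T (T + 1))).
    - eapply (lim_inf_ext' _ _ _ (INR x)); [|apply lim_const].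
      intros T HT. rewrite (int_id u v Hu Hv pr (INR x) T) by (auto; lra). ring.
    - replace (pr (Qf u v (INR x)) + pr I1 + pr I2) with ((pr (Qf u v (INR x)) + (-1) * 0) + pr I1 + pr I2 + 0) by ring.
      apply lim_inf_plus; [apply lim_inf_plus; [apply lim_inf_plus|]|]; auto.
      apply lim_inf_plus; [apply lim_const|]. apply lim_inf_scal. apply Qf_lim; auto.
      apply Hf_tail; auto. }
  apply Cext; cbn [Re Im Cadd].
  - unfold Jv; cbn [Re]. apply Main. left; auto. exact L1r. exact L2r.
  - unfold Jv; cbn [Im]. apply Main. right; auto. exact L1i. exact L2i.
Qed.
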